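(* For every $1\leq p <\infty$, $B^{p}$ is a Banach space.
   Context: Let $\mathcal{B}$ be the Borel $\sigma$-algebra of $\mathbb{R}$, $\lambda$ the Lebesgue measure, and $\mathcal{B}_{\infty}$ the $\sigma$-algebra on $\mathbb{R}^{\mathbb{N}}$ generated by the cylinder sets $\prod_{i=1}^{m}C_{i}\times\prod_{i=m+1}^{\infty}\mathbb{R}$ with $C_i\in\mathcal{B}$, $m\in\mathbb{N}$. Let $\mathcal{F}(\mathcal{B},\lambda)$ be the set of finite rectangles $\prod_{i\in\mathbb{N}}C_{i}$ with $C_i\in\mathcal{B}$ and $\prod_{i}\lambda(C_i)\in[0,\infty)$, with $\mathrm{vol}(\prod_{i}C_i):=\prod_i\lambda(C_i)$. The measure $\mu$ is the restriction to $\mathcal{B}_{\infty}$ of the outer measure $\mu^{\ast}(A):=\inf\{\sum_{n}\mathrm{vol}(\mathscr{C}_{n}) : \mathscr{C}_{n}\in\mathcal{F}(\mathcal{B},\lambda),\ A\subset\bigcup_{n}\mathscr{C}_{n}\}$ ($\inf\varnothing=\infty$). Let $I:=\mathbb{Z}^{\mathbb{N}}$ and, for $\mathfrak{a}=(a_n)\in I$, $\mathcal{C}_{\mathfrak{a}}:=\prod_{n\in\mathbb{N}}[a_{n},a_{n}+1)$. Define $B^{p}:=\{f\in L^{p}(\mu) : \int_{\mathcal{C}_{\mathfrak{a}}}|f|^{p}\,d\mu=0 \text{ for each } \mathfrak{a}\in I\}$, with the $L^p(\mu)$ norm. *)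

(* Defs.v *)
From HB Require Import structures.
From mathcomp Require Import all_boot all_order all_algebra.
From mathcomp Require Import all_classical all_reals all_analysis.

Set Implicit Arguments.
Unset Strict Implicit.
Unset Printing Implicit Defensive.
Import Order.TTheory GRing.Theory Num.Theory.
Import numFieldNormedType.Exports.

Local Open Scope classical_set_scope.
Local Open Scope ring_scope.

Section Defs.
Variable R : realType.

(* Points of R^N are sequences x : nat -> R (the index set N is taken to be
   nat = {0,1,2,...}; this is just a relabelling of {1,2,...}). *)

(* Borel sets of R: the canonical sigma-algebra of measurableTypeR R
   (generated by half-open intervals, i.e. the Borel sigma-algebra). *)
Definition borelR (C : set R) : Prop := @measurable _ (measurableTypeR R) C.

Definition rect (C : nat -> set R) : set (nat -> R) :=
  [set x | forall i, C i (x i)].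

Definition cylinders : set (set (nat -> R)) :=
  [set A | exists (m : nat) (C : nat -> set R),
      (forall i, (i < m)%N -> borelR (C i)) /\
      A = [set x | forall i, (i < m)%N -> C i (x i)]].

Definition Binf := g_sigma_algebraType cylinders.

Definition rect_vol (C : nat -> set R) (v : R) : Prop :=
  ((fun n => \prod_(i < n) lebesgue_measure (C i)) @ \oo --> v%:E)%E.

Definition finite_rect (C : nat -> set R) (v : R) : Prop :=
  (forall i, borelR (C i)) /\ rect_vol C v.

(* The outer measure mu^* (inf of the empty set is +oo). *)
Definition mu_star (A : set (nat -> R)) : \bar R :=
  ereal_inf [set s : \bar R | exists (C : nat -> nat -> set R) (v : nat -> R),
     [/\ forall n, finite_rect (C n) (v n),
         A `<=` \bigcup_n rect (C n) &
         s = (\sum_(0 <= n <oo) (v n)%:E)%E]].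

Definition cube (a : nat -> int) : set (nat -> R) :=
  rect (fun n => [set y : R | (a n)%:~R <= y < (a n + 1)%:~R]).

Definition Lp (mu : {measure set Binf -> \bar R}) (p : R) (f : Binf -> R) :
  Prop := measurable_fun setT f /\ finite_norm mu p%:E f.

Definition Bp (mu : {measure set Binf -> \bar R}) (p : R) (f : Binf -> R) :
  Prop :=
  Lp mu p f /\
  forall a : nat -> int,
    (\int[mu]_(x in (cube a : set Binf)) ((`|f x| `^ p)%:E) = 0)%E.

Definition Lpnorm (mu : {measure set Binf -> \bar R}) (p : R)
  (f : Binf -> R) : \bar R := Lnorm mu p%:E (EFin \o f).

End Defs.

(* Main.v *)
Require Import Defs.
From HB Require Import structures.
From mathcomp Require Import all_boot all_order all_algebra.
From mathcomp Require Import all_classical all_reals all_analysis.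
From mathcomp Require Import measurable_realfun.
Import Order.TTheory GRing.Theory Num.Theory.
Import numFieldNormedType.Exports.
Local Open Scope classical_set_scope.
Local Open Scope ring_scope.

Section cont.
Context {R : realType}.

Lemma cvg_normpow (p : R) (p0 : 0 < p) (a : nat -> R) (l : R) :
  a @ \oo --> l -> (fun k => `|a k| `^ p) @ \oo --> `|l| `^ p.
Proof.
move=> al.
have nl : (fun k => `|a k|) @ \oo --> `|l|.
  by apply: cvg_norm.
have [l0|l0] := eqVneq l 0.
  rewrite l0 normr0 powR0 ?gt_eqF//.
  move: nl; rewrite l0 normr0 => nl.
  apply/cvgrPdist_lt => e e0.
  have e1 : 0 < e `^ p^-1 by rewrite powR_gt0.
  move/cvgrPdist_lt : nl => /(_ _ e1).
  apply: filterS => k.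
  rewrite sub0r normrN normr_id => hk.
  rewrite sub0r normrN ger0_norm ?powR_ge0//.
  have := gt0_ltr_powR p0 _ _ hk.
  rewrite -powRrM mulVf ?gt_eqF// powRr1 ?(ltW e0)//.
  by apply; rewrite nnegrE// ?powR_ge0.
have lp : 0 < `|l| by rewrite normr_gt0.
have E : forall z : R, 0 < z -> z `^ p = expR (p * ln z).
  by move=> z z0; rewrite /powR gt_eqF.
have : (fun k => expR (p * ln `|a k|)) @ \oo --> expR (p * ln `|l|).
  apply: continuous_cvg; first exact: continuous_expR.
  apply: cvgMl_tmp.
  apply: continuous_cvg => //.
  exact: continuous_ln.
rewrite (E _ lp).
apply: cvg_trans; apply: near_eq_cvg.
have : \forall k \near \oo, 0 < `|a k|.
  exact: (cvgr_gt _ nl _ lp).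
apply: filterS => k k0.
by rewrite E.
Unshelve. all: by end_near. Qed.
End cont.

Section lp.
Context d (T : measurableType d) (R : realType).
Variable mu : {measure set T -> \bar R}.
Variable p : R.
Hypothesis p1 : 1 <= p.
Local Notation N f := (Lnorm mu p%:E (EFin \o f%R)).

Let p0 : 0 < p. Proof. exact: (lt_le_trans ltr01 p1). Qed.
Let pn0 : p != 0. Proof. by rewrite gt_eqF. Qed.

Lemma Nint (f : T -> R) :
  (\int[mu]_x ((`|f x| `^ p)%:E) = N f `^ p)%E.
Proof.
rewrite powR_Lnorm//; apply: eq_integral => x _.
Unshelve. all: by end_near. Qed.

Lemma Neqabs (f g : T -> R) : (forall x, `|f x| = `|g x|) -> N f = N g.
Proof.
move=> fg; rewrite unlock /=; congr (_ `^ _)%E; apply: eq_integral => x _.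
by rewrite /= fg.
Unshelve. all: by end_near. Qed.

Lemma Nle_int (f : T -> R) (e : R) : 0 <= e ->
  (\int[mu]_x ((`|f x| `^ p)%:E) <= (e `^ p)%:E)%E -> (N f <= e%:E)%E.
Proof.
move=> e0; rewrite Nint => h.
have -> : N f = (((N f) `^ p) `^ p^-1)%E.
  by rewrite -poweRrM mulfV// poweRe1//; exact: Lnorm_ge0.
apply: (@le_trans _ _ ((e `^ p)%:E `^ p^-1)%E); last first.
  by rewrite poweR_EFin -powRrM mulfV// powRr1.
apply: gt0_ler_poweR => //; first by rewrite invr_ge0 ltW.
- by rewrite in_itv /= poweR_ge0 leey.
- by rewrite in_itv /= lee_fin powR_ge0 leey.
Unshelve. all: by end_near. Qed.

Lemma int_le_N (f : T -> R) (e : R) : 0 <= e ->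
  (N f <= e%:E)%E -> (\int[mu]_x ((`|f x| `^ p)%:E) <= (e `^ p)%:E)%E.
Proof.
move=> e0 h; rewrite Nint -poweR_EFin.
apply: gt0_ler_poweR => //; first by rewrite ltW.
- by rewrite in_itv /= Lnorm_ge0 leey.
- by rewrite in_itv /= lee_fin e0 leey.
Unshelve. all: by end_near. Qed.


Lemma Lp_complete (u : nat -> T -> R) :
  (forall n, measurable_fun setT (u n)) ->
  (forall n, (N (u n) < +oo)%E) ->
  (forall e : R, 0 < e -> exists M : nat, forall m n : nat,
      (M <= m)%N -> (M <= n)%N -> (N (fun x => u m x - u n x) < e%:E)%E) ->
  exists (s : nat -> nat) (h : nat -> T -> R) (f : T -> R),
   [/\ (forall k, measurable_fun setT (h k)),
       (forall k x, `|h k x| <= `|u (s k) x|),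
       (forall x, h ^~ x @ \oo --> f x),
       (measurable_fun setT f /\ (N f < +oo)%E) &
       (fun n => N (fun x => u n x - f x)) @ \oo --> 0%E].
Proof.
move=> mu_ fu cau.
pose c k : R := (2^-1) ^+ k.
have c0 k : 0 < c k by rewrite exprn_gt0 // invr_gt0.
have /choice [Nk hNk] : forall k, exists M : nat, forall m n : nat,
    (M <= m)%N -> (M <= n)%N -> (N (fun x => u m x - u n x) < (c k)%:E)%E.
  by move=> k; exact: cau.
pose s := fix s k := if k is k'.+1 then maxn (s k').+1 (Nk k) else Nk 0.
have sN k : (Nk k <= s k)%N by case: k => [|k] //=; rewrite leq_maxr.
have sS k : (s k < s k.+1)%N by rewrite /= leq_maxl.
have sk k : (k <= s k)%N.
  by elim: k => // k IH; exact: leq_ltn_trans IH (sS k).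
pose dd k x := u (s k.+1) x - u (s k) x.
have mdd k : measurable_fun setT (dd k) by apply: measurable_realfun.measurable_funB.
have Ndd k : (N (dd k) < (c k)%:E)%E.
  by apply: hNk; [exact: leq_trans (sN k) (ltnW (sS k))|exact: sN].
pose G K x := \sum_(k < K) `|dd k x|.
have mG K : measurable_fun setT (G K).
  by apply: measurable_sum => k; apply: measurableT_comp => //.
have G0 K x : 0 <= G K x by apply: sumr_ge0 => k _.
have GS K x : G K.+1 x = G K x + `|dd K x| by rewrite /G big_ord_recr.
have NG K : (N (G K) <= (\sum_(k < K) c k)%:E)%E.
  elim: K => [|K IH].
    rewrite big_ord0; apply: Nle_int => //.
    rewrite powR0 // (eq_integral (fun _ => 0%E)) ?integral0 // => x _.
    by rewrite /G big_ord0 normr0 powR0.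
  rewrite big_ord_recr /= EFinD.
  have -> : G K.+1 = (G K \+ (fun x => `|dd K x|))%R.
    by apply/funext => x; rewrite GS.
  apply: (le_trans (minkowski_EFin _ _ _ _)) => //.
  - by apply: measurableT_comp => //.
  apply: leeD => //.
  rewrite (@Neqabs _ (dd K)); last by move=> x; rewrite normr_id.
  exact: ltW.
have sumc K : \sum_(k < K) c k + 2 * c K = 2.
  elim: K => [|K IH]; first by rewrite big_ord0 add0r /c expr0 mulr1.
  rewrite big_ord_recr /= -[RHS]IH /c exprS mulrA divff ?mul1r; last by [].
  by rewrite -addrA -mulr2n mulr_natl.
have NG2 K : (N (G K) <= 2%:E)%E.
  apply: (le_trans (NG K)); rewrite lee_fin -(sumc K) lerDl.
  by rewrite mulr_ge0 // ltW.

pose F : nat -> T -> \bar R := fun K x => ((`|G K x| `^ p)%:E)%E.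
have mF K : measurable_fun setT (F K).
  apply/measurable_EFinP; apply: (measurableT_comp (@measurable_powR R p)).
  by apply: measurableT_comp => //.
have F0 K x : (0 <= F K x)%E by rewrite lee_fin powR_ge0.
have Gnd x : nondecreasing_seq (G ^~ x).
  apply: (homo_leq (@lexx _ _)) => [y z w|K]; first exact: le_trans.
  by rewrite GS lerDl.
have Fnd x : nondecreasing_seq (F ^~ x).
  move=> m n mn; rewrite lee_fin ge0_ler_powR ?nnegrE //; first exact: ltW.
  by rewrite !ger0_norm //; exact: Gnd.
pose Fl x := limn (F ^~ x).
have Fcvg x : F ^~ x @ \oo --> Fl x by exact: ereal_nondecreasing_is_cvgn.
have mFl : measurable_fun setT Fl.
  by apply: (emeasurable_fun_cvg _ _ mF) => x _; exact: Fcvg.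
have Fl_ge x K : (F K x <= Fl x)%E.
  apply: lime_ge; first exact: Fcvg.
  by near=> n; apply: Fnd; near: n; exists K.
have Fl0 x : (0 <= Fl x)%E by exact: le_trans (F0 0%N x) (Fl_ge x 0%N).
have intFl : (\int[mu]_x Fl x <= (2 `^ p)%:E)%E.
  rewrite (monotone_convergence mu measurableT mF (fun K x _ => F0 K x) (fun x _ => Fnd x)).
  apply: lime_le.
    apply: ereal_nondecreasing_is_cvgn => m n mn.
    by apply: ge0_le_integral => // x _; exact: Fnd.
  by apply: nearW => K; apply: int_le_N => //.
have Flint : mu.-integrable setT Fl.
  apply/integrableP; split => //; apply: (le_lt_trans _ (ltry (2 `^ p))).
  by under eq_integral => x _ do rewrite gee0_abs //.
have := integrable_ae measurableT Flint.
case=> Nb [mNb muNb subNb].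
have good x : ~ Nb x -> Fl x \is a fin_num.
  move=> nx; apply: contrapT => nfin; apply: nx; apply: subNb => /=.
  by move=> /(_ I).

have ucvg x : ~ Nb x -> cvgn (fun k => u (s k) x).
  move=> nx; have fx := good x nx.
  have Gb K : G K x <= 1 + fine (Fl x).
    have h1 : `|G K x| `^ p <= fine (Fl x).
      by rewrite -lee_fin fineK //; exact: Fl_ge.
    have [G1|G1] := leP (G K x) 1.
      by rewrite ler_wpDr // fine_ge0.
    apply: (le_trans _ (ler_wpDl ler01 h1)).
    by rewrite ger0_norm //; apply: le1r_powR => //; exact: ltW.
  have cn : cvgn [normed series (fun k => dd k x)].
    apply: nondecreasing_is_cvgn.
      by apply: nondecreasing_series => n _ _; exact: normr_ge0.
    exists (1 + fine (Fl x)) => _ [K _ <-].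
    apply: le_trans (Gb K); rewrite /G -(big_mkord xpredT (fun k => `|dd k x|)).
    exact: lexx.
  have cs := normed_cvg cn.
  have -> : (fun k => u (s k) x) = (fun k => u (s 0%N) x + series (fun k => dd k x) k).
    apply/funext => k; rewrite [LHS](eq_sum_telescope (fun k => u (s k) x)).
    by [].
  by apply: is_cvgD => //; exact: is_cvg_cst.
pose h k := (u (s k)) \_ (~` Nb).
have mh k : measurable_fun setT (h k).
  apply/(measurable_restrictT _ _).1; first exact: measurableC.
  exact: measurable_funS (mu_ (s k)).
have habs k x : `|h k x| <= `|u (s k) x|.
  by rewrite /h patchE; case: ifP => _ //; rewrite normr0.
have hcvg x : cvgn (h ^~ x).
  have [nx|nx] := pselect (Nb x).
    have -> : h ^~ x = fun _ => 0.
      by apply/funext => k; rewrite /h patchE ifF //; apply/negbTE; rewrite notin_setE /=; exact.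
    exact: is_cvg_cst.
  have -> : h ^~ x = fun k => u (s k) x.
    by apply/funext => k; rewrite /h patchE ifT //; rewrite inE.
  exact: ucvg.
pose f x := limn (h ^~ x).
have hf x : h ^~ x @ \oo --> f x by exact: hcvg.
have mf : measurable_fun setT f.
  by apply: (measurable_fun_cvg mh) => x _; exact: hf.

have mdiff (a b : T -> R) : measurable_fun setT a -> measurable_fun setT b ->
    measurable_fun setT (fun x => ((`|a x - b x| `^ p)%:E : \bar R)).
  move=> ma mb; apply/measurable_EFinP; apply: (measurableT_comp (@measurable_powR R p)).
  apply: measurableT_comp => //; exact: measurable_funB.
have intEq n k : (\int[mu]_x ((`|u n x - h k x| `^ p)%:E : \bar R) =
                 \int[mu]_x ((`|u n x - u (s k) x| `^ p)%:E : \bar R))%E.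
  apply: ae_eq_integral => //; [exact: mdiff|exact: mdiff|].
  exists Nb; split => // x /= H; apply: contrapT => nx; apply: H => _.
  by rewrite /h patchE ifT // inE.
have key n e M : 0 < e -> (forall m n : nat, (M <= m)%N -> (M <= n)%N ->
      (N (fun x => u m x - u n x) < e%:E)%E) -> (M <= n)%N ->
    (N (fun x => u n x - f x) <= e%:E)%E.
  move=> e0 hM Mn; apply: Nle_int; first exact: ltW.
  have cv x : (fun k => ((`|u n x - h k x| `^ p)%:E : \bar R)) @ \oo -->
              ((`|u n x - f x| `^ p)%:E : \bar R).
    apply/fine_cvgP; split; first exact: nearW.
    apply: cvg_normpow => //; apply: cvgB; [exact: cvg_cst|exact: hf].
  rewrite (eq_integral (fun x => limn_einf (fun k => ((`|u n x - h k x| `^ p)%:E : \bar R)))); last first.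
    by move=> x _; rewrite (cvg_limn_einf_sup (cv x)).1.
  have mdk k : measurable_fun setT (fun x => ((`|u n x - h k x| `^ p)%:E : \bar R)).
    exact: mdiff.
  have dk0 k x : setT x -> (0 <= ((`|u n x - h k x| `^ p)%:E : \bar R))%E.
    by move=> _; rewrite lee_fin powR_ge0.
  apply: le_trans (fatou mu measurableT mdk dk0) _.
  rewrite limn_einf_lim; apply: lime_le; first exact: is_cvg_einfs.
  exists M => // k /= Mk.
  apply: le_trans (_ : _ <= \int[mu]_x ((`|u n x - h k x| `^ p)%:E : \bar R))%E _.
    by apply: ereal_inf_lbound; exists k => /=.
  rewrite intEq; apply: int_le_N; first exact: ltW.
  apply: ltW; apply: hM => //; exact: leq_trans Mk (sk k).
have [M1 hM1] := cau 1 ltr01.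
have Nf1 n : (M1 <= n)%N -> (N (fun x => u n x - f x) <= 1%:E)%E.
  exact: key n 1 M1 ltr01 hM1.
exists s, h, f; split => //.
- split => //.
  have -> : f = (u M1 \+ (fun x => f x - u M1 x))%R.
    by apply/funext => x /=; rewrite addrC subrK.
  apply: le_lt_trans (minkowski_EFin _ _ _ _) _ => //.
  - exact: measurable_funB.
  rewrite (@Neqabs (fun x => f x - u M1 x) (fun x => u M1 x - f x)); last by move=> x; rewrite distrC.
  apply: lte_add_pinfty => //; exact: le_lt_trans (Nf1 M1 (leqnn _)) (ltry _).
- apply/fine_cvgP; split.
    exists M1 => // n /= Mn; rewrite ge0_fin_numE; last exact: Lnorm_ge0.
    exact: le_lt_trans (Nf1 n Mn) (ltry _).
  apply/cvgrPdist_le => e e0.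
  have [M hM] := cau e e0.
  exists (maxn M M1) => // n /= Mn.
  have fin : N (fun x => u n x - f x) \is a fin_num.
    rewrite ge0_fin_numE; last exact: Lnorm_ge0.
    apply: le_lt_trans (Nf1 n _) (ltry _).
    exact: leq_trans (leq_maxr _ _) Mn.
  rewrite sub0r normrN ger0_norm; last by apply: fine_ge0; exact: Lnorm_ge0.
  rewrite -lee_fin fineK //.
  exact: key n e M e0 hM (leq_trans (leq_maxl _ _) Mn).
Unshelve. all: by end_near. Qed.


End lp.


Lemma cube_meas (R : realType) (a : nat -> int) : measurable (cube a : set (Binf R)).
Proof.
pose C n := [set y : R | (a n)%:~R <= y < (a n + 1)%:~R].
have -> : (cube a : set (Binf R)) = \bigcap_m [set x | forall i, (i < m)%N -> C i (x i)].
  apply/seteqP; split => x /=.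
    by move=> hx m _ i _; exact: hx.
  by move=> hx i; exact: (hx i.+1 I i (ltnSn i)).
apply: bigcapT_measurable => m; apply: sub_sigma_algebra.
exists m, C; split => // i _.
have -> : C i = `[(a i)%:~R, (a i + 1)%:~R[%classic.
  by apply/seteqP; split => y; rewrite /= in_itv.
exact: measurable_itv.
Qed.

Theorem lemma3p5 (R : realType) (mu : {measure set Binf R -> \bar R})
  (mu_def : forall A : set (Binf R), measurable A -> mu A = mu_star A)
  (p : R) (p1 : 1 <= p) :
  [/\ Bp mu p (fun _ => 0),
      (forall (f g : Binf R -> R) (c : R), Bp mu p f -> Bp mu p g ->
         Bp mu p (fun x => c * f x + g x)) &
      (forall u : nat -> Binf R -> R,
         (forall n, Bp mu p (u n)) ->
         (forall e : R, 0 < e -> exists N : nat, forall m n : nat,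
            (N <= m)%N -> (N <= n)%N ->
            (Lpnorm mu p (fun x => (u m x - u n x)%R) < e%:E)%E) ->
         exists f : Binf R -> R, Bp mu p f /\
           ((fun n => Lpnorm mu p (fun x => (u n x - f x)%R)) @ \oo --> 0%E))].
Proof.
have p0 : 0 < p by exact: (lt_le_trans ltr01 p1).
have pn0 : p != 0 by rewrite gt_eqF.
have mpow (f : Binf R -> R) : measurable_fun setT f ->
    measurable_fun setT (fun x => ((`|f x| `^ p)%:E : \bar R)).
  move=> mf; apply/measurable_EFinP; apply: (measurableT_comp (@measurable_powR R p)).
  by apply: measurableT_comp => //.
split.
- split; last first.
    move=> a; rewrite (eq_integral (fun _ => 0%E)) ?integral0 // => x _.
    by rewrite normr0 powR0.
  split; first exact: measurable_cst.
  rewrite /finite_norm.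
  have -> : (EFin \o (fun=> 0 : R)) = (cst 0%E : Binf R -> \bar R) by [].
  by rewrite Lnorm0.
- move=> f g c [[mf ff] cf] [[mg fg] cg]; split.
    have mem : (fun x => c * f x + g x) \in Lfun mu p%:E.
      have p1' : (1 <= p%:E)%E by rewrite lee_fin.
      have := (Lfun_submod_closed mu p1').2 c f g.
      apply.
        by rewrite !inE; apply/andP; split; rewrite inE.
      by rewrite !inE; apply/andP; split; rewrite inE.
    by move: mem; rewrite !inE => /andP[]; rewrite !inE.
  move=> a.
  have mD := cube_meas R a.
  have aeof (k : Binf R -> R) : measurable_fun setT k ->
      (\int[mu]_(x in (cube a : set (Binf R))) ((`|k x| `^ p)%:E) = 0)%E ->
      ae_eq mu (cube a : set (Binf R)) (fun x => ((`|k x| `^ p)%:E : \bar R)) (cst 0%E).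
    move=> mk ik; apply/(ae_eq_integral_abs mu mD).
      exact: measurable_funS (mpow _ mk).
    by under eq_integral do rewrite gee0_abs ?lee_fin ?powR_ge0//.
  rewrite (ae_eq_integral (cst 0%E)) ?integral0 //.
  - apply: measurable_funS (mpow _ _) => //.
    by apply: measurable_funD => //; exact: measurable_funM.
  - apply: filterS2 (aeof f mf (cf a)) (aeof g mg (cg a)) => x hf hg Dx.
    have := hf Dx; have := hg Dx => /= /eqP; rewrite eqe => /eqP /powR_eq0_eq0 /normr0_eq0 ->.
    move=> /eqP; rewrite eqe => /eqP /powR_eq0_eq0 /normr0_eq0 ->.
    by rewrite mulr0 addr0 normr0 powR0.
- move=> u Bu cau.
  have mu_ n : measurable_fun setT (u n) by case: (Bu n) => [[]].
  have fu n : finite_norm mu p%:E (u n) by case: (Bu n) => [[]].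
  have [s [h [f [mh habs hf [mf ff] cv]]]] := @Lp_complete _ _ _ mu p p1 u mu_ fu cau.
  exists f; split => //; split => // a.
  have mD := cube_meas R a.
  apply/eqP; rewrite eq_le; apply/andP; split; last first.
    by apply: integral_ge0 => x _; rewrite lee_fin powR_ge0.
  have cvx x : (fun k => ((`|h k x| `^ p)%:E : \bar R)) @ \oo -->
              ((`|f x| `^ p)%:E : \bar R).
    apply/fine_cvgP; split; first exact: nearW.
    exact: cvg_normpow.
  rewrite (eq_integral (fun x => limn_einf (fun k => ((`|h k x| `^ p)%:E : \bar R)))); last first.
    by move=> x _; rewrite (cvg_limn_einf_sup (cvx x)).1.
  have mdk k : measurable_fun (cube a : set (Binf R)) (fun x => ((`|h k x| `^ p)%:E : \bar R)).
    exact: measurable_funS (mpow _ (mh k)).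
  have dk0 k x : (cube a : set (Binf R)) x -> (0 <= ((`|h k x| `^ p)%:E : \bar R))%E.
    by move=> _; rewrite lee_fin powR_ge0.
  apply: le_trans (fatou mu mD mdk dk0) _.
  rewrite limn_einf_lim; apply: lime_le; first exact: is_cvg_einfs.
  apply: nearW => k.
  apply: le_trans (_ : _ <= \int[mu]_(x in (cube a : set (Binf R))) ((`|h k x| `^ p)%:E : \bar R))%E _.
    by apply: ereal_inf_lbound; exists k => /=.
  case: (Bu (s k)) => _ /(_ a) <-.
  apply: (ge0_le_integral mu mD (dk0 k) (mdk k)).
  - exact: measurable_funS (mpow _ (mu_ (s k))).
  - move=> x _; rewrite lee_fin ge0_ler_powR ?nnegrE //; exact: ltW.
Qed.
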